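(* Let $A=[\mathbf a_1,\dots,\mathbf a_M]\in\mathbb{R}_+^{K\times M}$ with column sums $\mathbf 1^\top\mathbf a_y>0$ for all $y$, let $\boldsymbol\beta\in\mathbb{R}_+^K$ with $b:=\mathbf 1^\top\boldsymbol\beta>0$, assume $\{\mathbf w\ge\mathbf 0:A\mathbf w=\boldsymbol\beta\}\neq\emptyset$, and let $D=\mathrm{diag}(1,\dots,M)$. Define \[\theta^*_{\max}=\max_{\mathbf w\ge\mathbf 0,\,A\mathbf w=\boldsymbol\beta}\mathbf 1^\top AD\mathbf w,\quad\tilde\theta_{\max}=\max_{\mathbf w\ge\mathbf 0,\,\mathbf 1^\top A\mathbf w=b}\mathbf 1^\top AD\mathbf w,\] \[\theta^*_{\min}=\min_{\mathbf w\ge\mathbf 0,\,A\mathbf w=\boldsymbol\beta}\mathbf 1^\top AD\mathbf w,\quad\tilde\theta_{\min}=\min_{\mathbf w\ge\mathbf 0,\,\mathbf 1^\top A\mathbf w=b}\mathbf 1^\top AD\mathbf w.\] Then \[\tilde\theta_{\max}-\theta^*_{\max}\ge\frac b2\Big\|\frac{\boldsymbol\beta}{\mathbf 1^\top\boldsymbol\beta}-\frac{\mathbf a_M}{\mathbf 1^\top\mathbf a_M}\Big\|_1,\qquad\theta^*_{\min}-\tilde\theta_{\min}\ge\frac b2\Big\|\frac{\boldsymbol\beta}{\mathbf 1^\top\boldsymbol\beta}-\frac{\mathbf a_1}{\mathbf 1^\top\mathbf a_1}\Big\|_1.\] *)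

(* Defs.v *)
From HB Require Import structures.
From mathcomp Require Import all_boot all_order all_algebra.
From mathcomp Require Import classical_sets reals.
Set Implicit Arguments. Unset Strict Implicit. Unset Printing Implicit Defensive.
Import Order.TTheory GRing.Theory Num.Theory.
Local Open Scope ring_scope.
Local Open Scope classical_set_scope.

(* Columns are indexed by 'I_n (n = M, the number of columns); the column
   with index y : 'I_n is a_{y+1} in the paper, so D = diag(1,...,n). *)

Definition onesr (K : nat) (R : ringType) : 'rV[R]_K := const_mx 1.

Definition Dmat (R : ringType) (n : nat) : 'M[R]_n :=
  diag_mx (\row_(y < n) (y.+1)%:R).

Definition objective (R : ringType) (K n : nat) (A : 'M[R]_(K, n)) (w : 'cV[R]_n) : R :=
  (onesr K R *m A *m Dmat R n *m w) 0 0.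

Definition nonneg_vec (R : numDomainType) (n : nat) (w : 'cV[R]_n) : Prop :=
  forall y, 0 <= w y 0.

Definition sumv (R : ringType) (n : nat) (v : 'cV[R]_n) : R := \sum_(i < n) v i 0.

Definition l1norm (R : numDomainType) (n : nat) (v : 'cV[R]_n) : R := \sum_(i < n) `|v i 0|.

Definition feas_star (R : numDomainType) (K n : nat) (A : 'M[R]_(K, n)) (beta : 'cV[R]_K)
  : set 'cV[R]_n := [set w | nonneg_vec w /\ A *m w = beta].

Definition feas_tilde (R : numDomainType) (K n : nat) (A : 'M[R]_(K, n)) (b : R)
  : set 'cV[R]_n := [set w | nonneg_vec w /\ sumv (A *m w) = b].

(* max / min of the objective over a feasible set (attained here: the sets are
   nonempty compact polytopes, so sup/inf are the max/min) *)
Definition theta_max (R : realType) (K n : nat) (A : 'M[R]_(K, n)) (S : set 'cV[R]_n) : R :=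
  sup [set objective A w | w in S].
Definition theta_min (R : realType) (K n : nat) (A : 'M[R]_(K, n)) (S : set 'cV[R]_n) : R :=
  inf [set objective A w | w in S].

(* Main.v *)
Require Import Defs.
From HB Require Import structures.
From mathcomp Require Import all_boot all_order all_algebra.
From mathcomp Require Import classical_sets reals.
From mathcomp Require Import ring lra.
Import Order.TTheory GRing.Theory Num.Theory.
Local Open Scope ring_scope.
Local Open Scope classical_set_scope.

Section H.
Variables (R : realType) (K n : nat) (A : 'M[R]_(K, n)).
Definition cs (j : 'I_n) : R := \sum_i A i j.

Lemma cs_col j : sumv (col j A) = cs j.
Proof. by rewrite /sumv /cs; apply: eq_bigr => i _; rewrite mxE. Qed.

Lemma objE w : objective A w = \sum_(j < n) (j.+1)%:R * cs j * w j 0.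
Proof.
rewrite /objective mxE; apply: eq_bigr => j _.
rewrite /Dmat mul_mx_diag !mxE; congr (_ * _).
rewrite mulrC; congr (_ * _); rewrite /cs; apply: eq_bigr => i _.
by rewrite !mxE mul1r.
Qed.

Lemma sumAwE w : sumv (A *m w) = \sum_j cs j * w j 0.
Proof.
rewrite /sumv /cs.
under eq_bigr do rewrite mxE.
rewrite exchange_big /=; apply: eq_bigr => j _.
by rewrite mulr_suml.
Qed.
End H.
Arguments cs {R K n} A j.

Section K.
Variables (R : realType) (K n : nat) (A : 'M[R]_(K, n)).
Hypothesis hA : forall i j, 0 <= A i j.

Lemma cs_ge0 j : 0 <= cs A j.
Proof. by apply: sumr_ge0 => i _. Qed.

Lemma key w k (f : 'I_n -> R) : nonneg_vec w -> 0 < cs A k -> f k = 0 ->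
  (forall j, j != k -> 1 <= f j) -> 0 < sumv (A *m w) ->
  sumv (A *m w) / 2 * l1norm ((sumv (A *m w))^-1 *: (A *m w)
      - (sumv (col k A))^-1 *: col k A) <= \sum_j f j * cs A j * w j 0.
Proof.
move=> hw hc fk hf hb.
rewrite cs_col.
set b := sumv (A *m w) in hb *; set c := cs A k.
have bE : b = \sum_j cs A j * w j 0 by rewrite /b sumAwE.
pose t i j := b^-1 * w j 0 * (A i j - cs A j / c * A i k).
have entry i : ((b^-1 *: (A *m w) - c^-1 *: col k A) i 0) = \sum_j t i j.
  rewrite !mxE /t.
  under [in RHS]eq_bigr do rewrite mulrBr.
  rewrite sumrB; congr (_ - _).
    by rewrite mulr_sumr; apply: eq_bigr => j _; ring.
  transitivity ((\sum_j cs A j * w j 0) * b^-1 * (c^-1 * A i k)).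
    by rewrite -bE mulfV ?mul1r // gt_eqF.
  by rewrite !mulr_suml; apply: eq_bigr => j _; ring.
have tj j : \sum_i `|t i j| <= 2 * b^-1 * (f j * cs A j * w j 0).
  have [->|njk] := eqVneq j k.
    rewrite fk big1 ?mul0r ?mulr0 // => i _.
    by rewrite /t /c divff ?mul1r ?subrr ?mulr0 ?normr0 // gt_eqF.
  apply: (@le_trans _ _ (\sum_i b^-1 * w j 0 * (A i j + cs A j / c * A i k))).
    apply: ler_sum => i _; rewrite /t normrM ger0_norm; last first.
      by rewrite mulr_ge0 // invr_ge0 ltW.
    apply: ler_wpM2l; first by rewrite mulr_ge0 // invr_ge0 ltW.
    apply: (le_trans (ler_normB _ _)).
    rewrite !ger0_norm //; apply: mulr_ge0 => //; apply: divr_ge0; [exact: cs_ge0|exact: ltW].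
  rewrite -mulr_sumr big_split /= -mulr_sumr -/(cs A j).
  have -> : \sum_i A i k = c by [].
  rewrite divfK ?gt_eqF //.
  have h1 := hf j njk.
  have hcs := cs_ge0 j.
  have hwj := hw j.
  have hbi : 0 <= b^-1 by rewrite invr_ge0 ltW.
  have h : cs A j * w j 0 <= f j * cs A j * w j 0.
    by rewrite -mulrA ler_peMl // mulr_ge0.
  have -> : b^-1 * w j 0 * (cs A j + cs A j) = 2 * b^-1 * (cs A j * w j 0) by ring.
  by rewrite ler_wpM2l // mulr_ge0.
have hl : l1norm (b^-1 *: (A *m w) - c^-1 *: col k A)
    <= 2 * b^-1 * \sum_j f j * cs A j * w j 0.
  rewrite /l1norm.
  under eq_bigr do rewrite entry.
  apply: (le_trans (ler_sum _ (fun i _ => ler_norm_sum _ _ _))).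
  rewrite exchange_big /= mulr_sumr; exact: ler_sum.
have hb2 : 0 <= b / 2 by rewrite divr_ge0 // ltW.
apply: (le_trans (ler_wpM2l hb2 hl)).
rewrite !mulrA.
have -> : b / 2 * 2 * b^-1 = 1 by field; rewrite gt_eqF.
by rewrite mul1r.
Qed.
End K.

Section P.
Variables (R : realType) (K n : nat) (A : 'M[R]_(K, n)).

Definition pt (k : 'I_n) (b : R) : 'cV[R]_n :=
  \col_j (if j == k then b / cs A k else 0).

Lemma pt_sum k b : 0 < cs A k -> \sum_j cs A j * pt k b j 0 = b.
Proof.
move=> hc; rewrite (bigD1 k) //= big1 => [|j /negbTE hj]; last by rewrite mxE hj mulr0.
by rewrite mxE eqxx addr0 mulrC divfK // gt_eqF.
Qed.

Lemma pt_obj k b : 0 < cs A k -> objective A (pt k b) = (k.+1)%:R * b.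
Proof.
move=> hc; rewrite objE (bigD1 k) //= big1 => [|j /negbTE hj]; last by rewrite mxE hj mulr0.
by rewrite mxE eqxx addr0 -mulrA [cs A k * _]mulrC divfK // gt_eqF.
Qed.

Lemma pt_tilde k b : 0 < cs A k -> 0 <= b -> feas_tilde A b (pt k b).
Proof.
move=> hc hb; split; last by rewrite sumAwE pt_sum.
by move=> y; rewrite mxE; case: ifP => _ //; rewrite divr_ge0 // ltW.
Qed.
End P.
Arguments pt {R K n} A k b.

Theorem lemma2 (R : realType) (K M : nat) (A : 'M[R]_(K, M.+1)) (beta : 'cV[R]_K)
  (hA : forall i y, 0 <= A i y)
  (hcol : forall y, 0 < sumv (col y A))
  (hbeta : nonneg_vec beta)
  (hb : 0 < sumv beta)
  (hfeas : feas_star A beta !=set0) :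
  let b := sumv beta in
  let aM := col ord_max A in
  let a1 := col ord0 A in
  (theta_max A (feas_tilde A b) - theta_max A (feas_star A beta)
     >= b / 2 * l1norm (b^-1 *: beta - (sumv aM)^-1 *: aM))
  /\
  (theta_min A (feas_star A beta) - theta_min A (feas_tilde A b)
     >= b / 2 * l1norm (b^-1 *: beta - (sumv a1)^-1 *: a1)).
Proof.
cbv zeta.
set b := sumv beta.
have hc y : 0 < cs A y by rewrite -cs_col.
have hb0 : 0 <= b by exact: ltW.
have bE w : feas_star A beta w -> \sum_j cs A j * w j 0 = b.
  by case=> _ hw; rewrite -sumAwE hw.
have keyS k (f : 'I_M.+1 -> R) w : feas_star A beta w -> f k = 0 ->
    (forall j, j != k -> 1 <= f j) ->
    b / 2 * l1norm (b^-1 *: beta - (sumv (col k A))^-1 *: col k A)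
      <= \sum_j f j * cs A j * w j 0.
  move=> [hw hAw] fk hf; rewrite /b -hAw; apply: key => //.
  by rewrite hAw.
have tE w : feas_tilde A b w -> \sum_j cs A j * w j 0 = b.
  by case=> _ hw; rewrite -sumAwE hw.
have cw_ge0 w j : nonneg_vec w -> 0 <= cs A j * w j 0.
  by move=> hw; rewrite mulr_ge0 // ?cs_ge0.
split.
- set N := l1norm _.
  have supS : theta_max A (feas_star A beta) <= (M.+1)%:R * b - b / 2 * N.
    apply: ge_sup.
      by case: hfeas => w hw; exists (objective A w); exists w.
    move=> _ [w hw <-].
    have h := keyS ord_max (fun j => (M - j)%:R) w hw.
    rewrite subnn in h; have {h} := h erefl.
    have hne : forall j : 'I_M.+1, j != ord_max -> 1 <= (M - j)%:R :> R.
      move=> j hj; rewrite ler1n subn_gt0.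
      by rewrite ltn_neqAle -ltnS ltn_ord andbT; apply: contra hj => /eqP hj; apply/eqP/val_inj.
    move/(_ hne) => h.
    suff : b / 2 * N <= (M.+1)%:R * b - objective A w by move=> ?; lra.
    apply: (le_trans h).
    rewrite objE -(bE w hw) mulr_sumr -sumrB; apply: ler_sum => j _.
    rewrite natrB; last by rewrite -ltnS ltn_ord.
    rewrite -!natr1; rewrite le_eqVlt; apply/orP; left; apply/eqP; ring.
  have supT : (M.+1)%:R * b <= theta_max A (feas_tilde A b).
    have hub : has_ubound [set objective A w | w in feas_tilde A b].
      exists ((M.+1)%:R * b) => _ [w hw <-].
      rewrite objE -(tE w hw) mulr_sumr; apply: ler_sum => j _.
      rewrite -mulrA ler_wpM2r ?cw_ge0 //; first by case: hw.
      by rewrite ler_nat ltn_ord.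
    apply: (ub_le_sup hub); exists (pt A ord_max b); first exact: pt_tilde.
    by rewrite pt_obj.
  lra.
- set N := l1norm _.
  have infS : b + b / 2 * N <= theta_min A (feas_star A beta).
    apply: lb_le_inf.
      by case: hfeas => w hw; exists (objective A w); exists w.
    move=> _ [w hw <-].
    have h := keyS ord0 (fun j => (j : nat)%:R) w hw erefl.
    have hne : forall j : 'I_M.+1, j != ord0 -> 1 <= (j : nat)%:R :> R.
      move=> j hj; rewrite ler1n lt0n; apply: contra hj => /eqP hj; apply/eqP/val_inj.
      exact: hj.
    move/(_ hne): h => h.
    suff : b / 2 * N <= objective A w - b by move=> ?; lra.
    apply: (le_trans h).
    rewrite objE -(bE w hw) -sumrB; apply: ler_sum => j _.
    rewrite -natr1 le_eqVlt; apply/orP; left; apply/eqP; ring.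
  have infT : theta_min A (feas_tilde A b) <= b.
    have hlb : has_lbound [set objective A w | w in feas_tilde A b].
      exists b => _ [w hw <-].
      rewrite objE -{1}(tE w hw); apply: ler_sum => j _.
      rewrite -mulrA ler_peMl ?cw_ge0 //; first by case: hw.
      by rewrite ler1n.
    have hE : [set objective A w | w in feas_tilde A b] (objective A (pt A ord0 b)).
      by exists (pt A ord0 b) => //; exact: pt_tilde.
    by have := ge_inf hlb hE; rewrite pt_obj // mul1r.
  lra.
Qed.
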